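(* Let $q$ be a prime power and let $d,\tau,n,m$ be integers with $\lfloor (d-1)/2\rfloor<\tau<d<n\le m$ and $\tau\le n-\tau$. If either $\tau=d/2$ or $m\ge (n-\tau)(2\tau-d+1)+\tau+1$, then there exist a code $\mathcal C\subseteq\mathbb F_{q^m}^n$ with minimum rank distance exactly $d$ and a word $\mathbf r\in\mathbb F_{q^m}^n$ such that $$\max_{\mathbf y\in\mathbb F_{q^m}^n}|\mathcal C\cap\mathcal B_\tau(\mathbf y)|\ \ge\ |\mathcal C\cap\mathcal B_\tau(\mathbf r)|\ \ge\ q^{(n-\tau)(2\tau-d+1)}.$$
   Context: Fixing a basis of $\mathbb F_{q^m}$ over $\mathbb F_q$, each vector in $\mathbb F_{q^m}^n$ is identified with an $m\times n$ matrix over $\mathbb F_q$; $\mathrm{rk}$ denotes its rank. The minimum rank distance of $\mathcal C$ is $\min\{\mathrm{rk}(\mathbf c_1-\mathbf c_2):\mathbf c_1\ne\mathbf c_2\in\mathcal C\}$, and $\mathcal B_\tau(\mathbf r)=\{\mathbf x:\mathrm{rk}(\mathbf x-\mathbf r)\le\tau\}$. Codes need not be linear. *)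

(* Defs.v *)
From HB Require Import structures.
From mathcomp Require Import all_boot all_order all_algebra.
Set Implicit Arguments. Unset Strict Implicit. Unset Printing Implicit Defensive.
Import GRing.Theory.
Local Open Scope ring_scope.

(* Vectors of F_{q^m}^n are identified (via a fixed F_q-basis of F_{q^m})
   with m x n matrices over F_q; the rank weight is the matrix rank. *)

Definition rkdist (F : fieldType) (m n : nat) (A B : 'M[F]_(m, n)) : nat :=
  \rank (A - B).

Definition rk_ball (F : finFieldType) (m n : nat) (tau : nat) (r : 'M[F]_(m, n))
  : {set 'M[F]_(m, n)} :=
  [set x : 'M[F]_(m, n) | (rkdist x r <= tau)%N].

Definition min_rank_dist (F : finFieldType) (m n : nat)
  (C : {set 'M[F]_(m, n)}) (d : nat) : Prop :=
  (exists c1, exists c2, [/\ c1 \in C, c2 \in C, c1 != c2 & rkdist c1 c2 = d])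
  /\ (forall c1 c2, c1 \in C -> c2 \in C -> c1 != c2 -> (d <= rkdist c1 c2)%N).

(* Main.v *)
Require Import Defs.
From HB Require Import structures.
From mathcomp Require Import all_boot all_order all_algebra.
From mathcomp Require Import all_fingroup all_field.
From mathcomp Require Import zify.
Set Implicit Arguments. Unset Strict Implicit. Unset Printing Implicit Defensive.
Import GRing.Theory.
Local Open Scope ring_scope.

Lemma ext_exists (F : finFieldType) (s : nat) : (0 < s)%N ->
  exists L : fieldExtType F, \dim {:L} = s.
Proof.
move=> s_gt0; pose m := (#|F| ^ s)%N.
have F_gt1 : (1 < #|F|)%N := finNzRing_gt1 F.
have m_gt1: (m > 1)%N by rewrite (ltn_exp2l 0) .
have m_gt0 := ltnW m_gt1; have m1_gt0: (m.-1 > 0)%N by rewrite -ltnS prednK.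
pose q (R : nzRingType) : {poly R} := 'X^m - 'X.
have Dq (R : nzRingType) : q R = ('X^(m.-1) - 1) * ('X - 0).
  by rewrite /q subr0 mulrBl mul1r -exprSr prednK.
have /FinSplittingFieldFor[/= L splitLq]: q F != 0.
  by rewrite Dq monic_neq0 ?rpredM ?monicXsubC ?monicXnsubC.
rewrite rmorphB rmorphXn /= map_polyX -/(q L) in splitLq.
have [p pr_p pcharFp] := finPcharP F.
have pcharL: p \in [pchar L] by rewrite pchar_lalg.
pose Fm := FinFieldExtType L; exists L.
have /finField_galois_generator[/= a _ Da]: (1 <= {:L})%VS by apply: sub1v.
pose Em := fixedSpace (a ^+ s)%g; rewrite dimv1 expn1 in Da.
have{splitLq} [zs DqL defL] := splitLq.
have mL0 : (m%:R : L) = 0.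
  have lg : (0 < logn p #|F|)%N.
    rewrite -(ltn_exp2l _ _ (prime_gt1 pr_p)) expn0 -(card_pprimeChar pcharFp).
    exact: F_gt1.
  rewrite /m (card_pprimeChar pcharFp) -expnM natrX.
  rewrite (pcharf0 pcharL) expr0n muln_eq0 (gtn_eqF lg) (gtn_eqF s_gt0) //.
have Uzs: uniq zs.
  rewrite -separable_prod_XsubC -(eqp_separable DqL) Dq separable_root andbC.
  rewrite /root !hornerE subr_eq0 eq_sym expr0n gtn_eqF ?oner_eq0 //=.
  rewrite cyclotomic.separable_Xn_sub_1 // -subn1 natrB // mL0 subr_eq0.
  by rewrite eq_sym oner_eq0.
suffices cardm: #|Fm| = m.
  have e := @card_vspace F Fm (Vector.class (L : vectType F)) fullv.
  have e2 := @card_vspacef F Fm (Vector.class (L : vectType F)).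
  rewrite e2 cardm /m in e; move/eqP: e; rewrite eqn_exp2l // => /eqP <-.
  by [].
suffices /eq_card->: Fm =i zs.
  apply: succn_inj; rewrite (card_uniqP _) //= -(size_prod_XsubC _ id).
  by rewrite -(eqp_size DqL) size_polyDl size_polyXn // size_polyN size_polyX.
have in_zs: zs =i Em.
  move=> z; rewrite -root_prod_XsubC -(eqp_root DqL) (sameP fixedSpaceP eqP).
  rewrite /root !hornerE subr_eq0 /= /m; congr (_ == z).
  elim: (s) => [|i IHi]; first by rewrite gal_id.
  by rewrite expgSr expnSr exprM IHi galM ?Da ?memvf.
suffices defEm: Em = {:L}%VS by move=> z; rewrite in_zs defEm memvf.
apply/eqP; rewrite eqEsubv subvf -defL -[Em]subfield_closed agenvS //.
by rewrite subv_add sub1v; apply/span_subvP=> z; rewrite in_zs.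
Qed.

Import VectorInternalTheory.

Section Block.
Variable R : fieldType.

Lemma rank_block_ge m1 m2 n1 n2 (D : 'M[R]_(m1, n2)) (E : 'M[R]_(m2, n1))
  (G : 'M[R]_(m2, n2)) : (\rank D + \rank E <= \rank (block_mx 0 D E G))%N.
Proof.
set X := block_mx _ _ _ _.
pose Q : 'M[R]_(n1 + n2, n1) := col_mx 1%:M 0.
have := mxrank_mul_ker X Q.
have -> : X *m Q = col_mx 0 E.
  by rewrite /X /Q mul_block_col !mulmx0 !mulmx1 !addr0.
rewrite rank_col_0mx => <-.
rewrite addnC leq_add2l -(rank_row_0mx n1 D).
apply: mxrankS; rewrite sub_capmx; apply/andP; split.
  have <- : row_mx (1%:M : 'M[R]_m1) (0 : 'M[R]_(m1, m2)) *m X = row_mx (0 : 'M[R]_(m1, n1)) D.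
    by rewrite /X block_mxEv mul_row_col mul1mx mul0mx addr0.
  exact: submxMl.
by apply/sub_kermxP; rewrite /Q mul_row_col mul0mx mulmx0 addr0.
Qed.

Lemma rank_block_le m1 m2 n2 (C : 'M[R]_(m1, n2)) (E : 'M[R]_(m2, m1)) :
  (\rank (block_mx (0 : 'M[R]_(m1, m1)) C E (E *m C)) <= \rank C + \rank E)%N.
Proof.
rewrite block_mxEv -addsmxE.
apply: leq_trans (mxrank_adds_leqif _ _).1 _.
rewrite rank_row_0mx leq_add2l.
have <- : E *m row_mx 1%:M C = row_mx E (E *m C) by rewrite mul_mx_row mulmx1.
exact: mxrankM_maxl.
Qed.

Lemma rank_cw m' n' t (C : 'M[R]_(t, n')) (E : 'M[R]_(m', t)) :
  (\rank (block_mx 1%:M C E (E *m C)) <= t)%N.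
Proof.
have <- : col_mx (1%:M : 'M[R]_t) E *m row_mx (1%:M : 'M[R]_t) C = block_mx 1%:M C E (E *m C).
  by rewrite mul_col_row !mulmx1 mul1mx.
exact: leq_trans (mxrankM_maxl _ _) (rank_leq_col _).
Qed.

End Block.
Section Cons.
Variables (F : finFieldType) (L : fieldExtType F).
Local Notation q := #|F|.
Local Notation N := (dim L).

Lemma frobD (x y : L) : (x + y) ^+ q = x ^+ q + y ^+ q.
Proof.
have [p _ pcharFp] := finPcharP F; rewrite (card_pprimeChar pcharFp).
have pcharL : p \in [pchar L] by rewrite pchar_lalg.
elim: (logn _ _) => [|n IHn]; first by rewrite !expr1.
by rewrite expnSr !exprM {}IHn -!(pFrobenius_autE pcharL) rmorphD.
Qed.

Lemma frobZ (a : F) (x : L) : (a *: x) ^+ q = a *: x ^+ q.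
Proof. by rewrite exprZn expf_card. Qed.

Lemma frobnD l (x y : L) : (x + y) ^+ (q ^ l) = x ^+ (q ^ l) + y ^+ (q ^ l).
Proof. by elim: l => [|l IH]; rewrite ?expr1 // expnSr !exprM IH frobD. Qed.

Lemma frobnZ l (a : F) (x : L) : (a *: x) ^+ (q ^ l) = a *: x ^+ (q ^ l).
Proof. by elim: l => [|l IH]; rewrite ?expr1 // expnSr !exprM IH frobZ. Qed.

Lemma mul_rV_lin1' m n (f : 'rV[F]_m -> 'rV[F]_n) : linear f ->
  forall u, u *m lin1_mx f = f u.
Proof.
move=> lf u.
pose fL : {linear 'rV[F]_m -> 'rV[F]_n} := HB.pack f (GRing.isLinear.Build _ _ _ _ f lf).
exact: (mul_rV_lin1 fL u).
Qed.

Lemma lin1_mxB m n (f g : 'rV[F]_m -> 'rV[F]_n) :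
  lin1_mx (fun v => f v - g v) = lin1_mx f - lin1_mx g.
Proof. by apply/matrixP=> i j; rewrite !mxE. Qed.


Variables (tau k : nat).

Definition coefs (H : 'M[F]_(k, N)) (l : 'I_k) : L := r2v (row l H).
Definition lpoly H : {poly L} := \sum_(l < k) coefs H l *: 'X^(q ^ l).
Definition iotaL (v : 'rV[F]_tau) : L := r2v (v *m (pid_mx tau : 'M_(tau, N))).
Definition fC H (v : 'rV[F]_tau) : 'rV[F]_N := v2r (lpoly H).[iotaL v].
Definition Cm H := lin1_mx (fC H).
Definition fE m' H (v : 'rV[F]_tau) : 'rV[F]_m' :=
  mxvec (\matrix_(l < k, t < N) v2r (coefs H l * iotaL v) 0 t)
    *m (pid_mx (k * N) : 'M_(k * N, m')).
Definition Em m' H := lin1_mx (fE m' H).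

Lemma horner_lpoly H x : (lpoly H).[x] = \sum_l coefs H l * x ^+ (q ^ l).
Proof. by rewrite /lpoly horner_sum; apply: eq_bigr => l _; rewrite hornerZ hornerXn. Qed.

Lemma lpoly_lin H (a : F) x y :
  (lpoly H).[a *: x + y] = a *: (lpoly H).[x] + (lpoly H).[y].
Proof.
rewrite !horner_lpoly scaler_sumr -big_split; apply: eq_bigr => l _.
by rewrite frobnD frobnZ mulrDr scalerAr.
Qed.

Lemma iotaL_lin (a : F) u v : iotaL (a *: u + v) = a *: iotaL u + iotaL v.
Proof. by rewrite /iotaL mulmxDl -scalemxAl linearD linearZ. Qed.

Lemma lin_fC H : linear (fC H).
Proof. by move=> a u v; rewrite /fC iotaL_lin lpoly_lin linearD linearZ. Qed.

Lemma mulCm H u : u *m Cm H = fC H u.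
Proof. exact: mul_rV_lin1' (lin_fC H) u. Qed.

Lemma lin_fE m' H : linear (fE m' H).
Proof.
move=> a u v; rewrite /fE scalemxAl -mulmxDl; congr (_ *m _).
rewrite -linearZ -linearD; congr mxvec.
by apply/matrixP=> i j; rewrite !mxE iotaL_lin mulrDr -scalerAr linearD linearZ !mxE.
Qed.

Lemma mulEm m' H u : u *m Em m' H = fE m' H u.
Proof. exact: mul_rV_lin1' (lin_fE m' H) u. Qed.

Lemma coefsB H1 H2 l : coefs (H1 - H2) l = coefs H1 l - coefs H2 l.
Proof. by rewrite /coefs linearB /= linearB. Qed.

Lemma lpolyB H1 H2 x : (lpoly (H1 - H2)).[x] = (lpoly H1).[x] - (lpoly H2).[x].
Proof.
rewrite !horner_lpoly -sumrB; apply: eq_bigr => l _.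
by rewrite coefsB mulrBl.
Qed.

Lemma CmB H1 H2 : Cm (H1 - H2) = Cm H1 - Cm H2.
Proof. by apply/matrixP=> i j; rewrite !mxE /fC lpolyB linearB !mxE. Qed.

Lemma fEB m' H1 H2 v : fE m' (H1 - H2) v = fE m' H1 v - fE m' H2 v.
Proof.
rewrite /fE -mulmxBl -linearB /=; congr (mxvec _ *m _).
by apply/matrixP=> l t; rewrite !mxE coefsB mulrBl linearB !mxE.
Qed.

Lemma EmB m' H1 H2 : Em m' (H1 - H2) = Em m' H1 - Em m' H2.
Proof. by apply/matrixP=> i j; rewrite [LHS]mxE fEB !mxE. Qed.


Lemma q_gt1 : (1 < q)%N. Proof. exact: finNzRing_gt1. Qed.

Lemma iotaL0 u : (tau <= N)%N -> iotaL u = 0 -> u = 0.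
Proof.
move=> tN; rewrite /iotaL => e.
have rf : row_free (pid_mx tau : 'M[F]_(tau, N)) by rewrite /row_free rank_pid_mx.
by apply: (row_free_inj rf); rewrite mul0mx; apply: r2v_inj; rewrite e linear0.
Qed.

Lemma iotaLB u v : iotaL (u - v) = iotaL u - iotaL v.
Proof. by rewrite /iotaL mulmxBl linearB. Qed.

Lemma nz_row (H : 'M[F]_(k, N)) : H != 0 -> exists l, coefs H l != 0.
Proof.
move=> nzH; apply/existsP; apply: contraR nzH; rewrite negb_exists => /forallP a.
apply/eqP/row_matrixP=> l; rewrite row0; apply: r2v_inj; rewrite linear0.
by apply/eqP; rewrite -[_ == _]negbK a.
Qed.

Lemma coef_lpoly H (l : 'I_k) : (lpoly H)`_(q ^ l) = coefs H l.
Proof.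
rewrite /lpoly coef_sum (bigD1 l) //= coefZ coefXn eqxx mulr1 big1 ?addr0 //.
move=> j jl; rewrite coefZ coefXn eqn_exp2l ?q_gt1 //.
by rewrite (_ : (l == j :> nat) = false) ?mulr0 //; apply/negbTE; rewrite eq_sym.
Qed.

Lemma lpoly_neq0 H : H != 0 -> lpoly H != 0.
Proof.
move=> /nz_row [l nz]; apply: contraNneq nz => e.
by rewrite -coef_lpoly e coef0.
Qed.

Lemma size_lpoly H : (size (lpoly H) <= (q ^ k.-1).+1)%N.
Proof.
apply: (leq_trans (size_sum _ _ _)); apply/bigmax_leqP => l _.
rewrite (leq_trans (size_scale_leq _ _)) // size_polyXn ltnS leq_exp2l ?q_gt1 //.
by rewrite -ltnS prednK ?ltn_ord // (leq_ltn_trans _ (ltn_ord l)).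
Qed.


Lemma rank_Cm H : (1 <= k)%N -> (tau <= N)%N -> H != 0 ->
  (tau + 1 - k <= \rank (Cm H))%N.
Proof.
move=> k1 tN nzH.
set A := Cm H; set K := kermx A; set r := \rank K.
have hr : (r <= k.-1)%N.
  pose g (w : 'rV[F]_r) : L := iotaL (w *m row_base K).
  have ginj : injective g.
    move=> w1 w2 e; apply/eqP; rewrite -subr_eq0; apply/eqP.
    apply: (row_free_inj (row_base_free K)); rewrite mul0mx mulmxBl.
    apply: iotaL0 => //; rewrite iotaLB; apply/eqP; rewrite subr_eq0; apply/eqP; exact: e.
  have groot w : root (lpoly H) (g w).
    have : (w *m row_base K <= K)%MS.
      by rewrite (submx_trans (submxMl _ _)) ?eq_row_base.
    move/sub_kermxP; rewrite mulCm /fC => e.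
    by apply/eqP; apply: v2r_inj; rewrite /g e linear0.
  have := max_poly_roots (lpoly_neq0 nzH) (rs := map g (enum 'rV[F]_r)).
  rewrite map_inj_uniq ?enum_uniq // size_map -cardE card_mx mul1n.
  have -> : all (root (lpoly H)) [seq g i | i <- enum 'rV_r].
    by apply/allP=> x /mapP [w _ ->].
  move=> /(_ isT isT) h.
  have h2 := leq_trans h (size_lpoly H).
  by rewrite -(leq_exp2l _ _ q_gt1) -ltnS.
have rA : \rank A = (tau - r)%N by rewrite /r mxrank_ker subKn ?rank_leq_row.
rewrite rA; lia.
Qed.


Lemma rank_Em m' H : (tau <= N)%N -> (k * N <= m')%N -> H != 0 ->
  \rank (Em m' H) = tau.
Proof.
move=> tN kN nzH; apply/eqP; rewrite -/(row_free _) -kermx_eq0.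
apply/eqP/row_matrixP => i; rewrite row0.
set w := row i _.
have : w *m Em m' H = 0 by apply/sub_kermxP; exact: row_sub.
rewrite mulEm /fE.
have rf : row_free (pid_mx (k * N) : 'M[F]_(k * N, m')).
  by rewrite /row_free rank_pid_mx.
rewrite -(mul0mx _ (pid_mx (k * N) : 'M[F]_(k * N, m'))) => /(row_free_inj rf).
move/(congr1 vec_mx); rewrite mxvecK linear0 => /matrixP e.
have [l nz] := nz_row nzH.
have e2 : coefs H l * iotaL w = 0.
  apply: v2r_inj; rewrite linear0; apply/rowP => t.
  by have := e l t; rewrite !mxE.
apply: iotaL0 => //; move/eqP: e2; rewrite mulf_eq0 (negbTE nz) /= => /eqP //.
Qed.


Definition Xw m' H : 'M[F]_(tau + m', tau + N) :=
  block_mx 1%:M (Cm H) (Em m' H)^T ((Em m' H)^T *m Cm H).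

Lemma Cm0 : Cm 0 = 0.
Proof. by rewrite -(subrr 0) CmB subrr. Qed.

Lemma Em0 m' : Em m' 0 = 0.
Proof. by rewrite -(subrr 0) EmB subrr. Qed.

Lemma main m' : (1 <= k)%N -> (k <= tau)%N -> (tau <= N)%N -> (k * N <= m')%N ->
  exists (C : {set 'M[F]_(tau + m', tau + N)}) (r : 'M[F]_(tau + m', tau + N)),
    min_rank_dist C (2 * tau + 1 - k) /\
    (#|C :&: rk_ball tau r| <= \max_(y : 'M[F]_(tau + m', tau + N)) #|C :&: rk_ball tau y|)%N /\
    (q ^ (N * k) <= #|C :&: rk_ball tau r|)%N.
Proof.
move=> k1 kt tN kN.
have dist H1 H2 : H1 != H2 -> (2 * tau + 1 - k <= \rank (Xw m' H1 - Xw m' H2)%R)%N.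
  move=> ne; have nz : H1 - H2 != 0 by rewrite subr_eq0.
  rewrite /Xw opp_block_mx add_block_mx subrr.
  apply: leq_trans (rank_block_ge _ _ _) => /=.
  have -> : (Em m' H1)^T - (Em m' H2)^T = (Em m' (H1 - H2))^T by rewrite EmB linearB.
  rewrite -CmB mxrank_tr rank_Em //.
  move: (rank_Cm k1 tN nz) => h; apply: leq_trans (leq_add h (leqnn tau)); lia.
have Xinj : injective (Xw m').
  move=> H1 H2 e; apply/eqP; apply/negP => /negP ne.
  have := dist _ _ ne; rewrite e subrr mxrank0; lia.
pose C := Xw m' @: [set: 'M[F]_(k, N)].
have Cball : C :&: rk_ball tau 0 = C.
  apply/setIidPl/subsetP => x /imsetP [H _ ->].
  by rewrite inE /rkdist subr0 rank_cw.
exists C, 0; split; last split.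
- split; last first.
    move=> c1 c2 /imsetP [H1 _ ->] /imsetP [H2 _ ->] ne; apply: dist.
    by apply: contraNneq ne => ->.
  pose T (H : 'M[F]_(k, N)) := (pid_mx k.-1 : 'M[F]_(k.-1, tau)) *m Cm H.
  have [[H1 H2] /= /andP [ne /eqP eT]|none] :=
    pickP [pred p : 'M[F]_(k, N) * 'M[F]_(k, N) | (p.1 != p.2) && (T p.1 == T p.2)]; last first.
    have Tinj : injective T.
      move=> H1 H2 e; apply/eqP; apply/negP => /negP ne.
      by have := none (H1, H2); rewrite /= ne e eqxx.
    have := leq_card T Tinj; rewrite !card_mx leq_exp2l ?q_gt1 // leq_mul2r.
    have N1 : (0 < N)%N by lia.
    rewrite -[N == 0%N]negbK -lt0n N1 /=; lia.
  set H0 := H1 - H2.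
  have nz : H0 != 0 by rewrite subr_eq0.
  have e0 : (pid_mx k.-1 : 'M[F]_(k.-1, tau)) *m Cm H0 = 0.
    by rewrite /H0 CmB mulmxBr; apply/eqP; rewrite subr_eq0; apply/eqP.
  have e1 : Cm H0 = copid_mx k.-1 *m Cm H0.
    rewrite /copid_mx mulmxBl mul1mx.
    have -> : (pid_mx k.-1 : 'M[F]_tau) = (pid_mx k.-1 : 'M[F]_(tau, k.-1)) *m (pid_mx k.-1 : 'M[F]_(k.-1, tau)).
      by rewrite mul_pid_mx !minnn.
    by rewrite -mulmxA e0 mulmx0 subr0.
  have rC : (\rank (Cm H0) <= tau - k.-1)%N.
    rewrite e1; apply: leq_trans (mxrankM_maxl _ _) _.
    rewrite rank_copid_mx //; lia.
  exists (Xw m' H0), (Xw m' 0); split.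
  + exact: imset_f.
  + exact: imset_f.
  + exact: (contra_neq (@Xinj H0 0) nz).
  apply/eqP; rewrite eqn_leq; apply/andP; split; last first.
    by rewrite /rkdist; apply: dist.
  rewrite /rkdist /Xw Cm0 Em0 trmx0 mulmx0 opp_block_mx add_block_mx !subr0 subrr.
  apply: leq_trans (rank_block_le _ _) _.
  rewrite mxrank_tr rank_Em //; lia.
- exact: leq_bigmax.
- rewrite Cball /C card_imset // cardsT card_mx mulnC //.
Qed.

End Cons.

Local Close Scope ring_scope.

Theorem lemma4 (F : finFieldType) (d tau n m : nat) :
  ((d.-1)./2 < tau)%N -> (tau < d)%N -> (d < n)%N -> (n <= m)%N ->
  (tau <= n - tau)%N ->
  (d = 2 * tau \/ ((n - tau) * (2 * tau + 1 - d) + tau + 1 <= m)%N) ->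
  exists (C : {set 'M[F]_(m, n)}) (r : 'M[F]_(m, n)),
    min_rank_dist C d /\
    (#|C :&: rk_ball tau r| <= \max_(y : 'M[F]_(m, n)) #|C :&: rk_ball tau y|)%N /\
    (#|F| ^ ((n - tau) * (2 * tau + 1 - d)) <= #|C :&: rk_ball tau r|)%N.
Proof.
move=> h1 h2 h3 h4 h5 h6.
have dle : (d.-1 < tau.*2)%N by rewrite -ltn_half_double.
rewrite -muln2 in dle.
have [k [ed ek]] : exists k, d = 2 * tau + 1 - k /\ 2 * tau + 1 - d = k.
  by exists (2 * tau + 1 - d); split; lia.
have k1 : (1 <= k)%N by lia.
have kt : (k <= tau)%N by lia.
rewrite ek ed.
have [m'' em] : exists m'', m = tau + m'' by exists (m - tau); lia.
have [s en] : exists s, n = tau + s by exists (n - tau); lia.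
have hs : n - tau = s by lia.
have tN : (tau <= s)%N by lia.
have kN : (k * s <= m'')%N.
  case: h6 => [e|h].
    have -> : k = 1 by lia.
    lia.
  rewrite hs ek in h; rewrite mulnC; lia.
rewrite hs.
subst m n.
have s0 : (0 < s)%N by lia.
have [L eL] := ext_exists F s0.
rewrite dimvf in eL; subst s.
exact: (main (L := L) (m' := m'') k1 kt tN kN).
Qed.
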